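(* Let $n\ge 3$ and $\mathcal F=\{\{1,2\},\{2,3\},\dots,\{n-1,n\},\{n,1\}\}$. Then the building closure of $\mathcal F$ is $\mathrm{Con}(C_n)$, and $\mathcal F$ is tight. Consequently, in the description $$\Delta_{\mathcal F}=\sum_{i=1}^n[e_i,e_{i+1}]=\{x:\phi_{[n]}(x)=n,\ \phi_X(x)\ge|\mathcal F_X|\ \forall X\in\mathrm{Con}(C_n)\}$$ (with $e_{n+1}:=e_1$) all inequalities for $X\in\mathrm{Con}(C_n)\setminus\{[n]\}$ are irredundant.
   Context: $\mathrm{Con}(C_n)$ is the family of subsets of $[n]$ inducing connected subgraphs of the cycle graph $C_n$, i.e. $[n]$ together with all nonempty proper cyclic intervals $\{i,i+1,\dots,j\}$ (indices mod $n$); the nestohedron $\Delta_{\mathrm{Con}(C_n)}$ is the cyclohedron $W_n$. A building set on $[n]$ is a family of nonempty subsets containing all singletons and closed under unions of intersecting members; the building closure of $\mathcal F$ is the minimal building set containing it. $\mathcal F_X=\{F\in\mathcal F:F\subseteq X\}$, $\phi_X(x)=\sum_{i\in X}x_i$, $\Delta_F=\mathrm{Conv}\{e_i:i\in F\}$, $\Delta_{\mathcal F}=\sum_{F\in\mathcal F}\Delta_F$. A connected hypergraph $\mathcal F$ is tight if each inequality $\phi_X(x)\ge|\mathcal F_X|$, $X\in\widehat{\mathcal F}\setminus\{[n]\}$, in the description $\Delta_{\mathcal F}=\{x:\phi_{[n]}(x)=|\mathcal F|,\ \phi_X(x)\ge|\mathcal F_X|\ \forall X\in\widehat{\mathcal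 F}\}$ is irredundant. *)

(* Defs.v *)
(* Ground set [n] is modelled as 'I_n = {0,...,n-1};
   the cyclic successor i |-> i+1 (mod n) is ordS. *)
From HB Require Import structures.
From mathcomp Require Import all_boot all_order all_algebra.
Set Implicit Arguments. Unset Strict Implicit. Unset Printing Implicit Defensive.
Import Order.TTheory GRing.Theory Num.Theory.

Definition building_set (n : nat) (B : {set {set 'I_n}}) : bool :=
  [&& set0 \notin B,
      [forall i : 'I_n, [set i] \in B] &
      [forall A in B, forall C in B, (A :&: C != set0) ==> (A :|: C \in B)]].

Definition bclosure (n : nat) (F : {set {set 'I_n}}) : {set {set 'I_n}} :=
  \bigcap_(B : {set {set 'I_n}} | building_set B && (F \subset B)) B.

Definition cint (n : nat) (i : 'I_n) (k : nat) : {set 'I_n} :=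
  [set iter t (@ordS n) i | t : 'I_k.+1].

Definition Con (n : nat) : {set {set 'I_n}} :=
  [set A : {set 'I_n} | (A == setT)
     || [exists i : 'I_n, exists k : 'I_n, (A == cint i k) && (A != setT)]].

Definition cycleF (n : nat) : {set {set 'I_n}} :=
  [set [set i; ordS i] | i : 'I_n].

Definition restr (n : nat) (F : {set {set 'I_n}}) (X : {set 'I_n}) :=
  [set G in F | G \subset X].

Definition phi (R : numDomainType) (n : nat) (X : {set 'I_n}) (x : 'I_n -> R) : R :=
  (\sum_(i in X) x i)%R.

Definition irredundant (R : realFieldType) (n : nat) (F : {set {set 'I_n}})
    (c : R) (D : {set {set 'I_n}}) (X : {set 'I_n}) : Prop :=
  exists x : 'I_n -> R,
    [/\ phi setT x = c,
        (forall Y, Y \in D -> Y != X -> (#|restr F Y|%:R <= phi Y x)%R)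
      & (phi X x < #|restr F X|%:R)%R].

Definition tight (R : realFieldType) (n : nat) (F : {set {set 'I_n}}) : Prop :=
  forall X, X \in bclosure F -> X != setT ->
    irredundant F (#|F|%:R : R)%R (bclosure F) X.

(* Main.v *)
Require Import Defs.
From HB Require Import structures.
From mathcomp Require Import all_boot all_order all_algebra.
From mathcomp Require Import zify ring lra.
Import Order.TTheory GRing.Theory Num.Theory.

Lemma modn2 x n : x < n + n -> x %% n = if x < n then x else x - n.
Proof.
case: ifP => h; first by rewrite modn_small.
move=> h2; have -> : x = (x - n) + n by lia.
by rewrite modnDr modn_small; lia.
Qed.

Ltac m2 x n := rewrite (@modn2 x n); [case: ifP => ? | lia].

Lemma arith_union n s t p k l: 2<n -> s<n -> t<n -> p<n -> k<n -> l<n -> (s+t)%%n = 0 -> t <= k -> ((p <= k) || ((s+p)%%n <= l)) = (p <= minn n.-1 (maxn k (t+l))).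
Proof. move=> ? ? ? ? ? ? h ?. move: h. m2 (s+t) n; m2 (s+p) n; move=> ?; apply/orP/idP; lia. Qed.

Lemma arith_wlog n s t p k l: 2<n -> s<n -> t<n -> p<n -> (s+t)%%n=0 -> p <= k -> (s+p)%%n <= l -> t <= k \/ s <= l.
Proof. move=> ? ? ? ? h1 ? h2. move: h1 h2. m2 (s+t) n; m2 (s+p) n; lia. Qed.

Lemma arith_key n s p k l: 2<n -> s<n -> p<n -> k.+1<n -> l < n.-1 ->
  (s+0)%%n <= l -> (s+k)%%n <= l -> ~~((s+k.+1)%%n <= l) -> ~~((s+n.-1)%%n <= l) ->
  ((s+p)%%n <= l) = (p <= k).
Proof. move=> ? ? ? ? ? h1 h2 h3 h4. move: h1 h2 h3 h4.
m2 (s+0) n; m2 (s+k) n; m2 (s+k.+1) n; m2 (s+n.-1) n; m2 (s+p) n; move=> *; apply/idP/idP; lia. Qed.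

Section S.
Variable n : nat.
Hypothesis hn : 2 < n.
Let n0 : 0 < n. Proof. lia. Qed.

Definition e (a : 'I_n) p : 'I_n := Ordinal (ltn_pmod (a + p) n0).
Definition pos (a j : 'I_n) := (j + (n - a)) %% n.

Lemma pos_lt a j : pos a j < n. Proof. exact: ltn_pmod. Qed.

Lemma posK a p : p < n -> pos a (e a p) = p.
Proof.
move=> hp; rewrite /pos /= modnDml.
have -> : a + p + (n - a) = p + n by have := ltn_ord a; lia.
by rewrite modnDr modn_small.
Qed.

Lemma e_pos a j : e a (pos a j) = j.
Proof.
apply: val_inj; rewrite /= /pos modnDmr.
have -> : a + (j + (n - a)) = j + n by have := ltn_ord a; lia.
by rewrite modnDr modn_small.
Qed.

Lemma pos_shift a b p : pos b (e a p) = (pos b a + p) %% n.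
Proof.
rewrite /pos /= modnDml modnDml.
by congr (_ %% _); lia.
Qed.

Lemma iter_ordS a t : iter t (@ordS n) a = e a t.
Proof.
apply: val_inj; elim: t => [|t IH] /=; first by rewrite addn0 modn_small.
rewrite IH /= -addn1 modnDml; congr (_ %% _); lia.
Qed.

Lemma mem_cint a k j : k < n -> (j \in cint a k) = (pos a j <= k).
Proof.
move=> hk; apply/imsetP/idP => [[t _ ->]|h].
  have := ltn_ord t => ht; rewrite iter_ordS posK; lia.
exists (Ordinal (h : pos a j < k.+1)) => //.
by rewrite iter_ordS e_pos.
Qed.

Lemma e_inj a p q : p < n -> q < n -> (e a p == e a q) = (p == q).
Proof.
move=> hp hq; apply/eqP/eqP => [h|->//].
by rewrite -(@posK a p hp) -(@posK a q hq) h.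
Qed.

Lemma cint_full (a : 'I_n) : cint a n.-1 = setT.
Proof.
apply/setP => j; rewrite inE mem_cint; last lia.
have := pos_lt a j; lia.
Qed.

Lemma ordSe (a : 'I_n) p : ordS (e a p) = e a p.+1.
Proof. apply: val_inj; rewrite /= -addn1 modnDml; congr (_ %% _); lia. Qed.


Lemma cint_Con a k : k < n -> cint a k \in Con n.
Proof.
move=> hk; rewrite inE; case: eqP => //= hne.
apply/existsP; exists a; apply/existsP; exists (Ordinal hk) => /=.
by rewrite eqxx; apply/eqP.
Qed.

Lemma ConP X : reflect (exists a k, k < n /\ X = cint a k) (X \in Con n).
Proof.
apply: (iffP idP) => [|[a [k [hk ->]]]]; last exact: cint_Con.
rewrite inE => /orP [/eqP ->|/existsP [a /existsP [k /andP [/eqP -> _]]]].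
  exists (Ordinal n0), n.-1; split; first lia. by rewrite cint_full.
by exists a, k.
Qed.

Lemma pb (b : 'I_n) : pos b b = 0.
Proof. by rewrite /pos subnKC ?modnn // ltnW. Qed.

Lemma st a b : (pos b a + pos a b) %% n = 0.
Proof. by rewrite -pos_shift e_pos pb. Qed.

Lemma memY a b l j : l < n -> (j \in cint b l) = ((pos b a + pos a j) %% n <= l).
Proof. by move=> hl; rewrite mem_cint // -{1}(e_pos a j) pos_shift. Qed.

Lemma union_Con a b k l : k < n -> l < n ->
  cint a k :&: cint b l != set0 -> cint a k :|: cint b l \in Con n.
Proof.
move=> hk hl /set0Pn [j]; rewrite inE (mem_cint a) // (memY a) // => /andP [h1 h2].
have [] := @arith_wlog n _ _ _ _ _ hn (pos_lt b a) (pos_lt a b) (pos_lt a j) (st a b) h1 h2 => H.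
  have -> : cint a k :|: cint b l = cint a (minn n.-1 (maxn k (pos a b + l))).
    apply/setP => i; rewrite !inE (mem_cint a) // (memY a) // !mem_cint //; last lia.
    exact: @arith_union n _ _ _ _ _ hn (pos_lt _ _) (pos_lt _ _) (pos_lt _ _) _ _ (st a b) H.
  apply: cint_Con; lia.
rewrite setUC.
have -> : cint b l :|: cint a k = cint b (minn n.-1 (maxn l (pos b a + k))).
  apply/setP => i; rewrite !inE (mem_cint b) // (memY b) // !mem_cint //; last lia.
  exact: @arith_union n _ _ _ _ _ hn (pos_lt _ _) (pos_lt _ _) (pos_lt _ _) _ _ (st b a) H.
apply: cint_Con; lia.
Qed.

Lemma Con_building : building_set (Con n).
Proof.
apply/and3P; split.
- apply/negP => /ConP [a [k [hk /setP /(_ a)]]].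
  by rewrite inE mem_cint // (pb a).
- apply/forallP => i.
  have -> : [set i] = cint i 0.
    apply/setP => j; rewrite inE mem_cint // leqn0.
    apply/eqP/eqP => [->|h]; first exact: pb.
    by rewrite -(e_pos i j) h; apply: val_inj; rewrite /= addn0 modn_small.
  exact: cint_Con.
- apply/forallP => A; apply/implyP => /ConP [a [k [hk ->]]].
  apply/forallP => C; apply/implyP => /ConP [b [l [hl ->]]].
  by apply/implyP; apply: union_Con.
Qed.

Lemma ea0 (a : 'I_n) : e a 0 = a.
Proof. by apply: val_inj; rewrite /= addn0 modn_small. Qed.

Lemma eq_e a j p : p < n -> (j == e a p) = (pos a j == p).
Proof. by move=> hp; rewrite -{1}(e_pos a j) e_inj // pos_lt. Qed.

Lemma pair_cint (a : 'I_n) : [set a; ordS a] = cint a 1.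
Proof.
apply/setP => j; rewrite !inE mem_cint; last lia.
rewrite -{1 2}(ea0 a) ordSe !eq_e //; try lia; have := pos_lt a j; lia.
Qed.

Lemma cycleF_Con : cycleF n \subset Con n.
Proof.
apply/subsetP => G /imsetP [i _ ->]; rewrite pair_cint; apply: cint_Con; lia.
Qed.

Lemma Con_min B : building_set B -> cycleF n \subset B -> Con n \subset B.
Proof.
case/and3P => _ /forallP Bs /forallP Bu FB.
apply/subsetP => X /ConP [a [k [hk ->]]].
elim: k hk => [|k IH] hk.
  have -> : cint a 0 = [set a].
    apply/setP => j; rewrite inE mem_cint // leqn0.
    apply/eqP/eqP => [h|->]; last exact: pb.
    by rewrite -(e_pos a j) h; apply: val_inj; rewrite /= addn0 modn_small.
  exact: Bs.
have -> : cint a k.+1 = cint a k :|: [set e a k; ordS (e a k)].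
  apply/setP => j; rewrite !inE !mem_cint ?ordSe ?eq_e; try lia; have := pos_lt a j; lia.
have h1 := IH (ltnW hk).
have h2 : [set e a k; ordS (e a k)] \in B.
  by apply: (subsetP FB); apply/imsetP; exists (e a k).
move: (Bu (cint a k)); rewrite h1 => /forallP /(_ [set e a k; ordS (e a k)]); rewrite h2 /= => /implyP; apply.
apply/set0Pn; exists (e a k); rewrite !inE eqxx mem_cint; last lia.
by rewrite posK; lia.
Qed.

Lemma closure_Con : bclosure (cycleF n) = Con n.
Proof.
apply/eqP; rewrite eqEsubset; apply/andP; split.
  by apply: bigcap_inf; rewrite Con_building cycleF_Con.
by apply/bigcapsP => B /andP [hB hF]; apply: Con_min.
Qed.

Lemma card_restr_le Y : #|restr (cycleF n) Y| <= #|[set i in Y | ordS i \in Y]|.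
Proof.
apply: (leq_trans _ (leq_imset_card (fun i : 'I_n => [set i; ordS i]) [set i in Y | ordS i \in Y])).
apply: subset_leq_card; apply/subsetP => G; rewrite inE => /andP [/imsetP [i _ ->] sub].
apply/imsetP; exists i => //; rewrite inE.
by rewrite (subsetP sub _ (set21 _ _)) (subsetP sub _ (set22 _ _)).
Qed.

Lemma proper_S (Y : {set 'I_n}) : Y != set0 -> Y != setT -> #|[set i in Y | ordS i \in Y]| < #|Y|.
Proof.
move=> /set0Pn [y hy] hT; apply: proper_card; apply/properP; split.
  by apply/subsetP => i; rewrite inE => /andP [].
case: (boolP [exists i in Y, ordS i \notin Y]) => [/existsP [i /andP [h1 h2]]|H].
  by exists i => //; rewrite inE h1.
exfalso; move/negP: hT; apply; apply/eqP/setP => j; rewrite inE.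
have cl : forall i, i \in Y -> ordS i \in Y.
  move=> i hi; apply/negPn/negP => h; move/negP: H; apply.
  by apply/existsP; exists i; rewrite hi h.
rewrite -(e_pos y j) -iter_ordS.
by elim: (pos y j) => [|t IH] //=; apply: cl.
Qed.

Lemma f_inj : injective (fun i : 'I_n => [set i; ordS i]).
Proof.
move=> i j /= h.
have : i \in [set j; ordS j] by rewrite -h set21.
have : j \in [set i; ordS i] by rewrite h set21.
rewrite !inE => /orP [/eqP -> //|/eqP hj] /orP [/eqP -> //|/eqP hi].
exfalso.
have : i = ordS (ordS (e i 0)) by rewrite ea0 -hj.
rewrite !ordSe => /eqP; rewrite eq_e ?pb //; lia.
Qed.

Lemma card_F : #|cycleF n| = n.
Proof. by rewrite card_imset ?card_ord //; exact: f_inj. Qed.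

Lemma card_X a k : k < n -> #|cint a k| <= #|restr (cycleF n) (cint a k)| + 1.
Proof.
move=> hk; rewrite (cardsD1 (e a k)).
suff : #|cint a k :\ e a k| <= #|restr (cycleF n) (cint a k)|.
  by move=> h; rewrite addnC leq_add // leq_b1.
apply: (@leq_trans #|[set [set i; ordS i] | i in [set i in cint a k | ordS i \in cint a k]]|).
  rewrite card_imset; last exact: f_inj.
  apply: subset_leq_card; apply/subsetP => i; rewrite !inE => /andP [hne hi]; rewrite hi /=.
  have -> : ordS i = e a (pos a i).+1 by rewrite -ordSe e_pos.
  have := pos_lt a i => hl.
  move: hne hi; rewrite !mem_cint // eq_e // => hne hi.
  rewrite posK; lia.
apply: subset_leq_card; apply/subsetP => G /imsetP [i]; rewrite inE => /andP [h1 h2] ->.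
rewrite inE; apply/andP; split; first by apply/imsetP; exists i.
by apply/subsetP => j; rewrite !inE => /orP [/eqP ->|/eqP ->].
Qed.

Variable R : realFieldType.
Local Open Scope ring_scope.

Definition xv (a : 'I_n) (k : nat) (j : 'I_n) : R :=
  1 + 3 / 4 * ((j == e a k.+1)%:R + (j == e a n.-1)%:R - (j == e a 0)%:R - (j == e a k)%:R).

Lemma sum_ind (Y : {set 'I_n}) c : \sum_(j in Y) ((j == c)%:R : R) = (c \in Y)%:R.
Proof.
case: (boolP (c \in Y)) => hc.
  rewrite (bigD1 c) //= eqxx big1 ?addr0 // => j /andP [_ /negbTE ->] //.
by rewrite big1 // => j hj; case: eqP hj => [->|]; [rewrite (negbTE hc)|].
Qed.

Lemma phi_x a k Y : phi Y (xv a k) = #|Y|%:R + 3 / 4 *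
  ((e a k.+1 \in Y)%:R + (e a n.-1 \in Y)%:R - (e a 0 \in Y)%:R - (e a k \in Y)%:R).
Proof.
rewrite /phi /xv big_split /= sumr_const -mulr_sumr !sumrB big_split /= !sum_ind.
by [].
Qed.


Lemma b2R (b : bool) : (b%:R : R) = if b then 1 else 0.
Proof. by case: b. Qed.

Lemma irr X : X \in Con n -> X != setT -> irredundant (cycleF n) (n%:R : R) (Con n) X.
Proof.
move=> /ConP [a [k [hk ->]]] hT.
have hk1 : (k.+1 < n)%N.
  suff : k != n.-1 by lia.
  by apply/eqP => hkn; move: hT; rewrite hkn cint_full eqxx.
exists (xv a k); split.
- rewrite phi_x !in_setT cardsT card_ord /=; lra.
- move=> Y /ConP [b [l [hl ->]]] hYX.
  have Fle := card_restr_le (cint b l).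
  have Sle : (#|[set i in cint b l | ordS i \in cint b l]| <= #|cint b l|)%N.
    by apply: subset_leq_card; apply/subsetP => i; rewrite inE => /andP [].
  rewrite phi_x.
  case: (eqVneq (cint b l) setT) => [hY|hY].
    rewrite hY !in_setT /=.
    have : (#|restr (cycleF n) setT| <= #|[set: 'I_n]|)%N.
      by rewrite -hY; apply: leq_trans Fle Sle.
    rewrite -(ler_nat R) => h; lra.
  have hl1 : (l < n.-1)%N.
    suff : l != n.-1 by lia.
    by apply/eqP => hln; move: hY; rewrite hln cint_full eqxx.
  have ne : cint b l != set0.
    by apply/set0Pn; exists b; rewrite mem_cint // pb.
  have lt := proper_S _ ne hY.
  have : (#|restr (cycleF n) (cint b l)| + 1 <= #|cint b l|)%N by lia.
  rewrite -(ler_nat R) natrD => hc.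
  have key : ~~ [&& e a 0 \in cint b l, e a k \in cint b l, e a k.+1 \notin cint b l
                 & e a n.-1 \notin cint b l].
    apply/negP => /and4P [h1 h2 h3 h4].
    move/negP: hYX; apply; apply/eqP/setP => j.
    rewrite (memY a) // (mem_cint a) //.
    move: h1 h2 h3 h4; rewrite !mem_cint // !pos_shift => h1 h2 h3 h4.
    apply: (@arith_key n) => //; try lia; apply: pos_lt.
  move: key hc.
  case: (e a 0 \in _); case: (e a k \in _); case: (e a k.+1 \in _);
    case: (e a n.-1 \in _) => //= _ hc; rewrite ?b2R; lra.
- have h := card_X a k hk.
  rewrite phi_x !mem_cint // !posK; try lia.
  have -> : (k.+1 <= k)%N = false by lia.
  have -> : (n.-1 <= k)%N = false by lia.
  rewrite leqnn leq0n /=.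
  move: h; rewrite -(ler_nat R) natrD => h; lra.
Qed.

End S.

Theorem mainTheorem9 (R : realFieldType) (n : nat) (hn : 3 <= n) :
  [/\ bclosure (cycleF n) = Con n,
      tight R (cycleF n)
    & forall X, X \in Con n -> X != setT ->
        irredundant (cycleF n) (n%:R : R) (Con n) X].
Proof.
have hb := closure_Con n hn.
split; first exact: hb.
- move=> X; rewrite hb (card_F n hn) => hX hT; exact: (irr n hn R X hX hT).
- move=> X hX hT; exact: (irr n hn R X hX hT).
Qed.
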